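(* There exist two MatP instances $I_A,I_B$ with the same underlying graph, differing only by a single swap in the preference order of one agent, such that a robust popular matching with respect to $I_A$ and $I_B$ exists but no robust dominant matching exists; in particular, a maximum-size robust popular matching need not be robust dominant. Concretely: $W=\{w_1,w_2,w_3\}$, $F=\{f_1,f_2,f_3\}$; in $I_A$: $w_1: f_1\succ f_3$, $w_2: f_1\succ f_2$, $w_3: f_3$; in $I_B$ the same except $w_1: f_3\succ f_1$; in both: $f_1: w_2\succ w_1$, $f_2: w_2$, $f_3: w_1\succ w_3$ (edges are exactly the pairs appearing in these lists). Then $\{\{w_1,f_3\},\{w_2,f_1\}\}$ is the unique robust popular matching and there is no robust dominant matching.
   Context: An instance $I$ of matchings under preferences (MatP) consists of a bipartite graph $G^I=(W\cup F,E^I)$ with disjoint finite vertex sets $W$ (workers) and $F$ (firms), whose elements are called agents, together with, for each agent $x$, a strict linear order $\succ_x^I$ over the set $N_x^I$ of neighbors of $x$ in $G^I$. A matching is a set of pairwise disjoint edges; $M(x)$ denotes the partner of a matched agent $x$. Agent $x$ prefers $M$ over $M'$ if $x$ is matched in $M$ and unmatched in $M'$, or matched in both with $M(x)\succ_x M'(x)$. Define $\mathrm{vote}^I_x(M,M')=1$ if $x$ prefers $M$ over $M'$, $-1$ if $x$ prefers $M'$ over $M$, and $0$ otherwise, and $\phi^I(M,M')=\sum_{x\in W\cup F}\mathrm{vote}^I_x(M,M')$. A matching $M$ of $G^I$ is popular for $I$ if $\phi^I(M,M')\ge 0$ for every matching $M'$ of $G^I$; it is dominant for $I$ if it is popular and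 $\phi^I(M,M')>0$ for every matching $M'$ of $G^I$ with $|M'|>|M|$. A matching is robust popular (resp. robust dominant) with respect to $I_A,I_B$ if it is popular (resp. dominant) for both. *)

(* Defs.v *)
From mathcomp Require Import all_boot all_order all_algebra.
Set Implicit Arguments. Unset Strict Implicit. Unset Printing Implicit Defensive.
Import Order.TTheory GRing.Theory Num.Theory.

(* A MatP instance: bipartite graph on W ∪ F given by its edge set, and for
   each agent a strict linear order on its neighbours, encoded as the list of
   its neighbours from most to least preferred. *)
Record instance (W F : finType) := Instance {
  edges : {set W * F};
  prefW : W -> seq F;
  prefF : F -> seq W }.

Definition wf_instance (W F : finType) (I : instance W F) : Prop :=
  (forall w, uniq (prefW I w) /\ forall f, (f \in prefW I w) = ((w, f) \in edges I)) /\
  (forall f, uniq (prefF I f) /\ forall w, (w \in prefF I f) = ((w, f) \in edges I)).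

Definition is_matching (W F : finType) (E : {set W * F}) (M : {set W * F}) : Prop :=
  M \subset E /\
  (forall e1 e2, e1 \in M -> e2 \in M -> e1 != e2 -> e1.1 != e2.1 /\ e1.2 != e2.2).

Definition partnerW (W F : finType) (M : {set W * F}) (w : W) : option F :=
  [pick f | (w, f) \in M].
Definition partnerF (W F : finType) (M : {set W * F}) (f : F) : option W :=
  [pick w | (w, f) \in M].

Definition prefers (T : eqType) (s : seq T) (a b : option T) : bool :=
  match a, b with
  | Some x, None => true
  | Some x, Some y => index x s < index y s
  | _, _ => false
  end.

Definition vote (T : eqType) (s : seq T) (a b : option T) : int :=
  (prefers s a b)%:Z - (prefers s b a)%:Z.

Definition phi (W F : finType) (I : instance W F) (M M' : {set W * F}) : int :=
  (\sum_(w : W) vote (prefW I w) (partnerW M w) (partnerW M' w) +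
   \sum_(f : F) vote (prefF I f) (partnerF M f) (partnerF M' f))%R.

Definition popular (W F : finType) (I : instance W F) (M : {set W * F}) : Prop :=
  is_matching (edges I) M /\
  forall M', is_matching (edges I) M' -> (0 <= phi I M M')%R.

Definition dominant (W F : finType) (I : instance W F) (M : {set W * F}) : Prop :=
  popular I M /\
  forall M', is_matching (edges I) M' -> #|M| < #|M'| -> (0 < phi I M M')%R.

Definition robust_popular (W F : finType) (IA IB : instance W F) M : Prop :=
  popular IA M /\ popular IB M.
Definition robust_dominant (W F : finType) (IA IB : instance W F) M : Prop :=
  dominant IA M /\ dominant IB M.

(* The concrete example: W = F = 'I_3, with w1,w2,w3 = 0,1,2 and f1,f2,f3 = 0,1,2. *)
Definition a1 : 'I_3 := @Ordinal 3 0 isT.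
Definition a2 : 'I_3 := @Ordinal 3 1 isT.
Definition a3 : 'I_3 := @Ordinal 3 2 isT.

Definition E_ex : {set 'I_3 * 'I_3} :=
  [set (a1, a1); (a1, a3); (a2, a1); (a2, a2); (a3, a3)].

Definition prefF_ex (f : 'I_3) : seq 'I_3 :=
  match val f with
  | 0 => [:: a2; a1]
  | 1 => [:: a2]
  | _ => [:: a1; a3]
  end.

Definition prefW_A (w : 'I_3) : seq 'I_3 :=
  match val w with
  | 0 => [:: a1; a3]
  | 1 => [:: a1; a2]
  | _ => [:: a3]
  end.

Definition prefW_B (w : 'I_3) : seq 'I_3 :=
  match val w with
  | 0 => [:: a3; a1]
  | 1 => [:: a1; a2]
  | _ => [:: a3]
  end.

Definition I_A : instance 'I_3 'I_3 := Instance E_ex prefW_A prefF_ex.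
Definition I_B : instance 'I_3 'I_3 := Instance E_ex prefW_B prefF_ex.

Definition M_ex : {set 'I_3 * 'I_3} := [set (a1, a3); (a2, a1)].

(* Main.v *)
Require Import Defs.
From mathcomp Require Import all_boot all_order all_algebra.
Import Order.TTheory GRing.Theory Num.Theory.
Set Implicit Arguments. Unset Strict Implicit.
Definition es : seq ('I_3 * 'I_3) := [:: (a1,a1); (a1,a3); (a2,a1); (a2,a2); (a3,a3)].
Definition mk (bs : seq bool) (e : 'I_3 * 'I_3) := (e \in es) && nth false bs (index e es).
Definition o3 := [:: a1; a2; a3].
Definition pk (bs : seq bool) w := ohead [seq f <- o3 | mk bs (w, f)].
Definition pkF (bs : seq bool) f := ohead [seq w <- o3 | mk bs (w, f)].
Definition phic (I : instance 'I_3 'I_3) bs bs' : int :=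
  ((vote (prefW I a1) (pk bs a1) (pk bs' a1) + vote (prefW I a2) (pk bs a2) (pk bs' a2) + vote (prefW I a3) (pk bs a3) (pk bs' a3)) +
  (vote (prefF I a1) (pkF bs a1) (pkF bs' a1) + vote (prefF I a2) (pkF bs a2) (pkF bs' a2) + vote (prefF I a3) (pkF bs a3) (pkF bs' a3)))%R.
Lemma enum3 : Finite.enum 'I_3 = o3.
Proof. apply: (inj_map val_inj); rewrite -enumT val_enum_ord; reflexivity. Qed.
Lemma pick3 (P : pred 'I_3) : [pick x | P x] = ohead [seq x <- o3 | P x].
Proof. by rewrite /pick /enum_mem enum3. Qed.
Lemma sum3 (F : 'I_3 -> int) : (\sum_(i : 'I_3) F i = F a1 + F a2 + F a3)%R.
Proof. rewrite !big_ord_recr big_ord0 /= add0r. by congr (F _ + F _ + F _)%R; apply: val_inj. Qed.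
Definition S (bs : seq bool) : {set 'I_3 * 'I_3} := [set e | mk bs e].
Definition bits (M : {set 'I_3 * 'I_3}) := [seq e \in M | e <- es].

Lemma inEex e : (e \in E_ex) = (e \in es).
Proof. by rewrite !inE !orbA. Qed.

Lemma bitsK (M : {set 'I_3 * 'I_3}) : M \subset E_ex -> S (bits M) = M.
Proof.
move=> H; apply/setP=> e; rewrite inE /mk; case He: (e \in es).
  by rewrite andTb (nth_map (a1,a1)) ?index_mem // nth_index.
apply/esym/negbTE; apply/negP => /(subsetP H); by rewrite inEex He.
Qed.

Lemma pickS bs w : [pick f | (w, f) \in S bs] = pk bs w.
Proof. rewrite pick3 /pk; congr ohead; apply: eq_filter => f; by rewrite inE. Qed.
Lemma pickFS bs f : [pick w | (w, f) \in S bs] = pkF bs f.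
Proof. rewrite pick3 /pkF; congr ohead; apply: eq_filter => w; by rewrite inE. Qed.

Lemma phiS I bs bs' : phi I (S bs) (S bs') = phic I bs bs'.
Proof. by rewrite /phi !sum3 /partnerW /partnerF !pickS !pickFS. Qed.

Definition matchingc (bs : seq bool) :=
  all (fun i => all (fun j => (i != j) ==> nth false bs i ==> nth false bs j ==>
     (((nth (a1,a1) es i).1 != (nth (a1,a1) es j).1) &&
      ((nth (a1,a1) es i).2 != (nth (a1,a1) es j).2))) (iota 0 5)) (iota 0 5).

Lemma match1 bs : matchingc bs -> is_matching E_ex (S bs).
Proof.
move=> H; split.
  by apply/subsetP => e; rewrite inE inEex => /andP[].
move=> e1 e2; rewrite !inE /mk => /andP[h1 b1] /andP[h2 b2] ne.
move/allP: H => /(_ (index e1 es)); rewrite mem_iota add0n.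
have -> : index e1 es < 5 by rewrite (index_mem e1 es).
move=> /(_ isT) /allP /(_ (index e2 es)); rewrite mem_iota add0n.
have -> : index e2 es < 5 by rewrite (index_mem e2 es).
move=> /(_ isT); rewrite !nth_index // b1 b2 /=.
have -> : (index e1 es != index e2 es).
  apply: contra ne => /eqP E.
  by rewrite -(nth_index (a1,a1) h1) E nth_index.
by move=> /andP[-> ->].
Qed.

Lemma match2 (M : {set 'I_3 * 'I_3}) : is_matching E_ex M -> matchingc (bits M).
Proof.
move=> [Hs Hd]; apply/allP => i; rewrite mem_iota => /andP[_ hi].
apply/allP => j; rewrite mem_iota => /andP[_ hj].
apply/implyP => ij; apply/implyP; rewrite (nth_map (a1,a1)) // => bi.
apply/implyP; rewrite (nth_map (a1,a1)) // => bj.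
have [] := Hd _ _ bi bj _; last by move=> -> ->.
by rewrite nth_uniq.
Qed.

Fixpoint allb n : seq (seq bool) :=
  if n is n'.+1 then [seq b :: s | b <- [:: true; false], s <- allb n'] else [:: [::]].

Lemma in_allb bs : size bs = 5 -> bs \in allb 5.
Proof.
case: bs => [|b0 [|b1 [|b2 [|b3 [|b4 [|]]]]]] //= _.
by case: b0; case: b1; case: b2; case: b3; case: b4.
Qed.

Definition popc I bs := all (fun b' => matchingc b' ==> (0 <= phic I bs b')%R) (allb 5).

Lemma popS I bs : edges I = E_ex -> matchingc bs -> popc I bs -> popular I (S bs).
Proof.
move=> HE mb H; split; first by rewrite HE; apply: match1.
move=> M'; rewrite HE => HM'.
rewrite -(bitsK (proj1 HM')) phiS.
move/allP: H => /(_ (bits M')); rewrite in_allb ?size_map //.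
by move=> /(_ isT) /implyP /(_ (match2 HM')).
Qed.

Lemma popS' I (M : {set 'I_3 * 'I_3}) : edges I = E_ex -> popular I M -> popc I (bits M).
Proof.
move=> HE [HM Hp]; rewrite HE in HM.
apply/allP => b' _; apply/implyP => mb'.
rewrite -phiS bitsK; last exact: HM.1.
apply: Hp; rewrite HE; exact: match1.
Qed.

Definition bsex := [:: false; true; true; false; false].
Definition bs3 := [:: true; false; false; true; true].

Lemma checkU : all (fun b => matchingc b ==> popc I_A b ==> popc I_B b ==> (b == bsex)) (allb 5).
Proof. by vm_compute. Qed.
Lemma checkEx : [&& matchingc bsex, popc I_A bsex, popc I_B bsex, matchingc bs3 &
   ~~ (0 < phic I_A bsex bs3)%R].
Proof. by vm_compute. Qed.

Lemma MexS : M_ex = S bsex.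
Proof.
have Hs : M_ex \subset E_ex by apply/subsetP => e; rewrite !inE => /orP[]/eqP->.
rewrite -(bitsK Hs); congr S; by rewrite /bits /= !inE.
Qed.

Lemma cardS bs : #|S bs| = size [seq e <- es | mk bs e].
Proof.
have U : uniq [seq e <- es | mk bs e] by rewrite filter_uniq.
move/card_uniqP: U => <-.
apply: eq_card => e; rewrite inE mem_filter /mk. by case: (e \in es); rewrite /= ?andbT ?andbF.
Qed.

Lemma wfA : wf_instance I_A.
Proof.
split.
  move=> [[|[|[|n]]] p] //; split=> //= -[[|[|[|m]]] q] //; by rewrite inEex.
move=> [[|[|[|n]]] p] //; split=> //= -[[|[|[|m]]] q] //; by rewrite inEex.
Qed.

Lemma wfB : wf_instance I_B.
Proof.
split.
  move=> [[|[|[|n]]] p] //; split=> //= -[[|[|[|m]]] q] //; by rewrite inEex.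
move=> [[|[|[|n]]] p] //; split=> //= -[[|[|[|m]]] q] //; by rewrite inEex.
Qed.

Lemma robustE M : robust_popular I_A I_B M <-> M = M_ex.
Proof.
have /and5P[m1 pA pB m3 nlt] := checkEx.
split; last first.
  by move=> ->; rewrite MexS; split; apply: popS.
move=> [HA HB].
have HM := proj1 HA.
have := allP checkU (bits M) (in_allb (size_map (fun e => e \in M) es)).
rewrite (match2 HM) (popS' _ HA) // (popS' _ HB) //= => /eqP Hb.
by rewrite -(bitsK (proj1 HM)) Hb MexS.
Qed.

Theorem mainTheorem14 :
  [/\ wf_instance I_A, wf_instance I_B,
      (* same graph, same firm preferences, workers' preferences differ only
         by a single swap in w1's list *)
      edges I_A = edges I_B /\ prefF I_A = prefF I_B /\
      (forall w, w != a1 -> prefW I_A w = prefW I_B w) /\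
      (exists x y, prefW I_A a1 = [:: x; y] /\ prefW I_B a1 = [:: y; x]),
      (* M_ex is the unique robust popular matching *)
      (forall M, robust_popular I_A I_B M <-> M = M_ex)
    & (* there is no robust dominant matching *)
      (forall M, ~ robust_dominant I_A I_B M)].
Proof.
split.
- exact: wfA.
- exact: wfB.
- split; first by []. split; first by []. split; last by exists a1, a3. move=> [[|[|[|n]]] p] //.


- exact: robustE.
move=> M [[HA dA] [HB dB]].
have EM : M = M_ex by apply/robustE; split. subst M.
have /and5P[m1 pA pB m3 nlt] := checkEx.
have := dA (S bs3) (match1 m3).
rewrite MexS !cardS phiS => /(_ isT).
by rewrite (negbTE nlt).
Qed.
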